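(* Fix $k\in\mathbb N$ and consider the atom–cavity coefficients on $\mathcal D=\mathcal H'\odot\mathcal D'$ described in the context. Then there exists $\varepsilon>0$ such that for every $u\in\mathcal D$ there are constants $c(\ell,u)\ge0$, $\ell\in\mathbb N$, with $\sum_{\ell=1}^\infty c(\ell,u)\varepsilon^\ell<\infty$ and $$\|X(1)X(2)\cdots X(\ell)u\|\le c(\ell,u)\sqrt{(\ell+m)!}$$ for every $\ell\in\mathbb N$ and every choice of $X(1),\dots,X(\ell)$ from $\{K^{(k)},K^{(k)*},L^{(k)}_i,L^{(k)*}_i,M^{(k)}_i,M^{(k)*}_i,N^{(k)}_{ij},N^{(k)*}_{ij}:1\le i,j\le n\}$ (adjoints taken formally on $\mathcal D$), where $m$ is the number of occurrences of $K^{(k)}$ or $K^{(k)*}$ among $X(1),\dots,X(\ell)$.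
   Context: $\mathcal H'$ is a separable complex Hilbert space, $\{\varphi_i\}_{i\in\mathbb Z_+}$ is the canonical basis of $\ell^2(\mathbb Z_+)$, and $b^\dagger\varphi_i=\sqrt{i+1}\varphi_{i+1}$, $b\varphi_i=\sqrt i\varphi_{i-1}$, $b^\dagger b\varphi_i=i\varphi_i$ on $\mathcal D'=\mathrm{span}\{\varphi_i\}$. $\mathcal H=\mathcal H'\otimes\ell^2(\mathbb Z_+)$ and $\mathcal D=\mathcal H'\odot\mathcal D'$ (algebraic tensor product). For $n\in\mathbb N$, $1\le i,j\le n$, the coefficients are $N^{(k)}_{ij}=S^{(k)}_{ij}$, $L^{(k)}_i=F^{(k)}_ib^\dagger+G^{(k)}_i$, $K^{(k)}=E^{(k)}_{11}b^\dagger b+E^{(k)}_{10}b^\dagger+E^{(k)}_{01}b+E^{(k)}_{00}$, where $E^{(k)}_{pq},F^{(k)}_i,G^{(k)}_i,S^{(k)}_{ij}$ are bounded operators on $\mathcal H'$, and these satisfy on $\mathcal D$ the Hudson–Parthasarathy relations $K^{(k)}+K^{(k)\dagger}=-\sum_iL^{(k)}_iL^{(k)\dagger}_i$, $\sum_jN^{(k)}_{mj}N^{(k)\dagger}_{\ell j}=\sum_jN^{(k)\dagger}_{jm}N^{(k)}_{j\ell}=\delta_{m\ell}$, with $M^{(k)}_i$ defined by $M^{(k)}_i=-\sum_jN^{(k)}_{ij}L^{(k)\dagger}_j$ (here $\dagger$ is the formal adjoint on $\mathcal D$, e.g. $(Xb^\dagger)^\dagger=X^*b$ for bounded $X$ on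 $\mathcal H'$). *)

(* Defs.v *)
From Stdlib Require Import Reals List Arith.
Import ListNotations.
Open Scope R_scope.
Set Implicit Arguments.

Record Cplx : Type := mkC { Cre : R ; Cim : R }.
Definition C0 : Cplx := mkC 0 0.
Definition C1 : Cplx := mkC 1 0.
Definition Cadd (a b : Cplx) : Cplx := mkC (Cre a + Cre b) (Cim a + Cim b).
Definition Cmul (a b : Cplx) : Cplx :=
  mkC (Cre a * Cre b - Cim a * Cim b) (Cre a * Cim b + Cim a * Cre b).
Definition Cconj (a : Cplx) : Cplx := mkC (Cre a) (- Cim a).
Definition RtoC (r : R) : Cplx := mkC r 0.

(** * Separable complex Hilbert spaces
    (inner product conjugate-linear in the first, linear in the second slot) *)
Record CHilbert : Type := {
  hcar :> Type;
  hzero : hcar;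
  hadd : hcar -> hcar -> hcar;
  hopp : hcar -> hcar;
  hscal : Cplx -> hcar -> hcar;
  hinner : hcar -> hcar -> Cplx;
  hadd_assoc : forall x y z, hadd x (hadd y z) = hadd (hadd x y) z;
  hadd_comm : forall x y, hadd x y = hadd y x;
  hadd_0 : forall x, hadd hzero x = x;
  hadd_opp : forall x, hadd x (hopp x) = hzero;
  hscal_1 : forall x, hscal C1 x = x;
  hscal_assoc : forall a b x, hscal a (hscal b x) = hscal (Cmul a b) x;
  hscal_distr_v : forall a x y, hscal a (hadd x y) = hadd (hscal a x) (hscal a y);
  hscal_distr_c : forall a b x, hscal (Cadd a b) x = hadd (hscal a x) (hscal b x);
  hinner_conj : forall x y, hinner y x = Cconj (hinner x y);
  hinner_add_r : forall x y z, hinner x (hadd y z) = Cadd (hinner x y) (hinner x z);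
  hinner_scal_r : forall a x y, hinner x (hscal a y) = Cmul a (hinner x y);
  hinner_pos : forall x, Cim (hinner x x) = 0 /\ 0 <= Cre (hinner x x);
  hinner_def : forall x, hinner x x = C0 -> x = hzero;
  hcomplete : forall u : nat -> hcar,
    (forall eps, eps > 0 -> exists N, forall p q, (N <= p)%nat -> (N <= q)%nat ->
        sqrt (Cre (hinner (hadd (u p) (hopp (u q))) (hadd (u p) (hopp (u q))))) < eps) ->
    exists l, forall eps, eps > 0 -> exists N, forall p, (N <= p)%nat ->
        sqrt (Cre (hinner (hadd (u p) (hopp l)) (hadd (u p) (hopp l)))) < eps;
  hseparable : exists d : nat -> hcar, forall x eps, eps > 0 -> exists k,
        sqrt (Cre (hinner (hadd x (hopp (d k))) (hadd x (hopp (d k))))) < eps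
}.

Arguments hzero {c}.

Definition hnorm (H : CHilbert) (x : H) : R := sqrt (Cre (hinner H x x)).

Record BOp (H : CHilbert) : Type := {
  bfun :> H -> H;
  b_add : forall x y, bfun (hadd H x y) = hadd H (bfun x) (bfun y);
  b_scal : forall a x, bfun (hscal H a x) = hscal H a (bfun x);
  b_bdd : exists M, forall x, hnorm H (bfun x) <= M * hnorm H x
}.

Definition is_adj (H : CHilbert) (A B : BOp H) : Prop :=
  forall x y, hinner H (A x) y = hinner H x (B y).

(** * The domain D = H' (algebraic tensor) span{phi_i}.
    An element sum_i u_i (x) phi_i is represented by the finite list
    [u_0; u_1; ...] of its coefficients (missing entries are 0). *)
Definition DV (H : CHilbert) := list (hcar H).

Section DOps.
Variable H : CHilbert.

(** equality in D (lists equal up to trailing zeros) *)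
Definition deq (u v : DV H) : Prop :=
  forall i, nth i u hzero = nth i v hzero.

Fixpoint ladd (u v : DV H) : DV H :=
  match u with
  | nil => v
  | x :: u' => match v with nil => u | y :: v' => hadd H x y :: ladd u' v' end
  end.

Definition lopp (u : DV H) : DV H := map (hopp H) u.

(** X (x) 1 for an operator X on H' *)
Definition lmap (A : H -> H) (u : DV H) : DV H := map A u.

Fixpoint wmul (k : nat) (f : nat -> R) (u : DV H) : DV H :=
  match u with
  | nil => nil
  | x :: u' => hscal H (RtoC (f k)) x :: wmul (S k) f u'
  end.

(** b^dagger phi_i = sqrt(i+1) phi_{i+1} *)
Definition bdag (u : DV H) : DV H := hzero :: wmul 0 (fun i => sqrt (INR (S i))) u.
(** b phi_i = sqrt i phi_{i-1} *)
Definition bann (u : DV H) : DV H := wmul 0 (fun j => sqrt (INR (S j))) (tl u).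
(** b^dagger b phi_i = i phi_i *)
Definition numop (u : DV H) : DV H := wmul 0 INR u.

(** norm in H = H' (x) l^2 *)
Definition lnorm (u : DV H) : R :=
  sqrt (fold_right (fun x acc => Cre (hinner H x x) + acc) 0 u).

Definition dsum (n : nat) (f : nat -> DV H -> DV H) (u : DV H) : DV H :=
  fold_right (fun j acc => ladd (f j u) acc) nil (seq 1 n).
End DOps.

(** * Atom-cavity coefficients (for the fixed index k) together with the
    Hilbert-space adjoints of the bounded coefficient operators *)
Record ACCoef (H : CHilbert) : Type := {
  E11 : BOp H; E10 : BOp H; E01 : BOp H; E00 : BOp H;
  E11s : BOp H; E10s : BOp H; E01s : BOp H; E00s : BOp H;
  Fc : nat -> BOp H; Gc : nat -> BOp H;
  Fcs : nat -> BOp H; Gcs : nat -> BOp H;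
  Sc : nat -> nat -> BOp H; Scs : nat -> nat -> BOp H
}.

Section Coefs.
Variables (H : CHilbert) (n : nat) (c : ACCoef H).

Definition ac_adjoint : Prop :=
  is_adj (E11 c) (E11s c) /\ is_adj (E10 c) (E10s c) /\
  is_adj (E01 c) (E01s c) /\ is_adj (E00 c) (E00s c) /\
  (forall i, (1 <= i <= n)%nat -> is_adj (Fc c i) (Fcs c i) /\ is_adj (Gc c i) (Gcs c i)) /\
  (forall i j, (1 <= i <= n)%nat -> (1 <= j <= n)%nat -> is_adj (Sc c i j) (Scs c i j)).

Definition Kop (u : DV H) : DV H :=
  ladd (ladd (lmap (E11 c) (numop u)) (lmap (E10 c) (bdag u)))
       (ladd (lmap (E01 c) (bann u)) (lmap (E00 c) u)).
Definition Ksop (u : DV H) : DV H :=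
  ladd (ladd (lmap (E11s c) (numop u)) (lmap (E10s c) (bann u)))
       (ladd (lmap (E01s c) (bdag u)) (lmap (E00s c) u)).
Definition Lop (i : nat) (u : DV H) : DV H :=
  ladd (lmap (Fc c i) (bdag u)) (lmap (Gc c i) u).
Definition Lsop (i : nat) (u : DV H) : DV H :=
  ladd (lmap (Fcs c i) (bann u)) (lmap (Gcs c i) u).
Definition Nop (i j : nat) (u : DV H) : DV H := lmap (Sc c i j) u.
Definition Nsop (i j : nat) (u : DV H) : DV H := lmap (Scs c i j) u.
Definition Mop (i : nat) (u : DV H) : DV H := lopp (dsum n (fun j v => Nop i j (Lsop j v)) u).
Definition Msop (i : nat) (u : DV H) : DV H := lopp (dsum n (fun j v => Lop j (Nsop i j v)) u).

Definition ac_HP : Prop :=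
  (forall u, deq (ladd (Kop u) (Ksop u)) (lopp (dsum n (fun i v => Lop i (Lsop i v)) u))) /\
  (forall m l, (1 <= m <= n)%nat -> (1 <= l <= n)%nat -> forall u,
      deq (dsum n (fun j v => Nop m j (Nsop l j v)) u) (if Nat.eqb m l then u else nil)) /\
  (forall m l, (1 <= m <= n)%nat -> (1 <= l <= n)%nat -> forall u,
      deq (dsum n (fun j v => Nsop j m (Nop j l v)) u) (if Nat.eqb m l then u else nil)).
End Coefs.

Inductive Gen : Type :=
| GK | GKs | GL (i : nat) | GLs (i : nat) | GM (i : nat) | GMs (i : nat)
| GN (i j : nat) | GNs (i j : nat).

Definition gen_ok (n : nat) (g : Gen) : Prop :=
  match g with
  | GK | GKs => True
  | GL i | GLs i | GM i | GMs i => (1 <= i <= n)%nat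
  | GN i j | GNs i j => (1 <= i <= n)%nat /\ (1 <= j <= n)%nat
  end.

Definition isK (g : Gen) : nat := match g with GK | GKs => 1%nat | _ => 0%nat end.
Definition countK (xs : list Gen) : nat := fold_right (fun g acc => (isK g + acc)%nat) 0%nat xs.

Definition gen_op (H : CHilbert) (n : nat) (c : ACCoef H) (g : Gen) : DV H -> DV H :=
  match g with
  | GK => Kop c | GKs => Ksop c
  | GL i => Lop c i | GLs i => Lsop c i
  | GM i => Mop n c i | GMs i => Msop n c i
  | GN i j => Nop c i j | GNs i j => Nsop c i j
  end.

(** X(1) X(2) ... X(l) u for xs = [X(1); ...; X(l)] *)
Definition apply_gens (H : CHilbert) (n : nat) (c : ACCoef H) (xs : list Gen) (u : DV H) : DV H :=
  fold_right (fun g v => gen_op n c g v) u xs.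

(* Main.v *)
Require Import Defs.
From Stdlib Require Import Reals List Arith Lra Lia.
Open Scope R_scope.

Definition nrm2 (H : CHilbert) (x : H) : R := Cre (hinner H x x).

Lemma nrm2_nonneg (H : CHilbert) (x : H) : 0 <= nrm2 H x.
Proof. unfold nrm2; apply (hinner_pos H x). Qed.

Lemma inner_add_l (H : CHilbert) (x y z : H) :
  hinner H (hadd H x y) z = Cadd (hinner H x z) (hinner H y z).
Proof.
  rewrite (hinner_conj H z (hadd H x y)), hinner_add_r.
  rewrite (hinner_conj H z x), (hinner_conj H z y).
  destruct (hinner H z x), (hinner H z y); unfold Cconj, Cadd; simpl; f_equal; ring.
Qed.

Lemma inner_scal_l (H : CHilbert) (a : Cplx) (x z : H) :
  hinner H (hscal H a x) z = Cmul (Cconj a) (hinner H x z).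
Proof.
  rewrite (hinner_conj H z (hscal H a x)), hinner_scal_r.
  rewrite (hinner_conj H z x).
  destruct a, (hinner H z x); unfold Cconj, Cmul; simpl; f_equal; ring.
Qed.

Lemma nrm2_add (H : CHilbert) (a b : H) :
  nrm2 H (hadd H a b) <= 2 * nrm2 H a + 2 * nrm2 H b.
Proof.
  assert (Hq := nrm2_nonneg H (hadd H a (hscal H (mkC (-1) 0) b))).
  unfold nrm2 in *.
  rewrite !inner_add_l, !hinner_add_r, !inner_scal_l, !hinner_scal_r in *.
  rewrite (hinner_conj H a b) in *.
  destruct (hinner H a a), (hinner H a b), (hinner H b b).
  unfold Cadd, Cmul, Cconj in *; simpl in *. lra.
Qed.

Lemma nrm2_scal (H : CHilbert) (r : R) (x : H) :
  nrm2 H (hscal H (RtoC r) x) = r ^ 2 * nrm2 H x.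
Proof.
  unfold nrm2; rewrite inner_scal_l, hinner_scal_r.
  destruct (hinner H x x); unfold RtoC, Cconj, Cmul; simpl. ring.
Qed.

Lemma nrm2_zero (H : CHilbert) : nrm2 H hzero = 0.
Proof.
  unfold nrm2.
  assert (E : hinner H hzero hzero = hinner H hzero (hadd H hzero hzero))
    by now rewrite hadd_0.
  rewrite hinner_add_r in E. destruct (hinner H hzero hzero).
  unfold Cadd in E; simpl in *. injection E; intros; lra.
Qed.

Lemma hadd_0r (H : CHilbert) (x : H) : hadd H x hzero = x.
Proof. rewrite hadd_comm; apply hadd_0. Qed.

Lemma hscal_0 (H : CHilbert) (x : H) : hscal H C0 x = hzero.
Proof.
  set (z := hscal H C0 x).
  assert (E : z = hadd H z z).
  { unfold z; rewrite <- hscal_distr_c. f_equal. unfold C0, Cadd; simpl; f_equal; ring. }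
  transitivity (hadd H (hadd H z z) (hopp H z)).
  - rewrite <- hadd_assoc, hadd_opp, hadd_0r. reflexivity.
  - rewrite <- E. apply hadd_opp.
Qed.

Lemma hopp_scal (H : CHilbert) (x : H) : hopp H x = hscal H (RtoC (-1)) x.
Proof.
  set (y := hscal H (RtoC (-1)) x).
  assert (E : hadd H y x = hzero).
  { unfold y. rewrite <- (hscal_1 H x) at 2. rewrite <- hscal_distr_c.
    rewrite <- (hscal_0 H x). f_equal. unfold C0, C1, RtoC, Cadd; simpl; f_equal; ring. }
  rewrite <- (hadd_0 H (hopp H x)), <- E, <- hadd_assoc, hadd_opp, hadd_0r. reflexivity.
Qed.

Lemma nrm2_opp (H : CHilbert) (x : H) : nrm2 H (hopp H x) = nrm2 H x.
Proof. rewrite hopp_scal, nrm2_scal. ring. Qed.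

Definition OB (H : CHilbert) (M : R) (B : H -> H) : Prop :=
  forall x, nrm2 H (B x) <= M * nrm2 H x.

Lemma OB_mono (H : CHilbert) M M' B : M <= M' -> OB H M B -> OB H M' B.
Proof.
  intros Hm Hb x. specialize (Hb x). pose proof (nrm2_nonneg H x). nra.
Qed.

Lemma bop_OB (H : CHilbert) (B : BOp H) : exists M, 0 <= M /\ OB H M B.
Proof.
  destruct (b_bdd B) as [M HM]. exists (M * M). split. nra.
  intros x. specialize (HM x). unfold hnorm in HM. unfold nrm2.
  pose proof (nrm2_nonneg H x) as h1. pose proof (nrm2_nonneg H (B x)) as h2.
  unfold nrm2 in *.
  set (a := Cre (hinner H (B x) (B x))) in *.
  set (b := Cre (hinner H x x)) in *.
  pose proof (sqrt_pos a). pose proof (sqrt_pos b).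
  pose proof (sqrt_sqrt a h2). pose proof (sqrt_sqrt b h1).
  assert (sqrt a * sqrt a <= (M * sqrt b) * (M * sqrt b)) by nra. nra.
Qed.

Definition SS (H : CHilbert) (u : DV H) : R :=
  fold_right (fun x acc => nrm2 H x + acc) 0 u.

Lemma lnorm_SS (H : CHilbert) (u : DV H) : lnorm u = sqrt (SS H u).
Proof. reflexivity. Qed.

Lemma SS_cons (H : CHilbert) x (u : DV H) : SS H (x :: u) = nrm2 H x + SS H u.
Proof. reflexivity. Qed.

Lemma SS_nonneg (H : CHilbert) (u : DV H) : 0 <= SS H u.
Proof. induction u; simpl. lra. pose proof (nrm2_nonneg H a). lra. Qed.

Lemma SS_lmap (H : CHilbert) M f (u : DV H) :
  OB H M f -> 0 <= M -> SS H (lmap f u) <= M * SS H u /\ length (lmap f u) = length u.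
Proof.
  intros Hf HM. unfold lmap. rewrite length_map. split; auto.
  induction u; simpl. lra. specialize (Hf a). lra.
Qed.

Lemma SS_ladd (H : CHilbert) (u v : DV H) :
  SS H (ladd u v) <= 2 * SS H u + 2 * SS H v.
Proof.
  revert v; induction u as [|x u IH]; intros [|y v]; simpl;
    try (pose proof (SS_nonneg H v); pose proof (nrm2_nonneg H y));
    try (pose proof (SS_nonneg H u); pose proof (nrm2_nonneg H x)); try lra.
  specialize (IH v). pose proof (nrm2_add H x y). lra.
Qed.

Lemma len_ladd (H : CHilbert) (u v : DV H) L :
  (length u <= L)%nat -> (length v <= L)%nat -> (length (ladd u v) <= L)%nat.
Proof.
  revert v L; induction u as [|x u IH]; intros [|y v] L h1 h2; simpl in *; auto.
  destruct L. lia. specialize (IH v L). lia.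
Qed.

Lemma SS_lopp (H : CHilbert) (u : DV H) : SS H (lopp u) = SS H u /\ length (lopp u) = length u.
Proof.
  unfold lopp. rewrite length_map. split; auto.
  induction u; simpl; auto. rewrite nrm2_opp, IHu. auto.
Qed.

Lemma SS_wmul (H : CHilbert) k f B (u : DV H) :
  (forall i, (k <= i < k + length u)%nat -> (f i) ^ 2 <= B) -> 0 <= B ->
  SS H (wmul k f u) <= B * SS H u /\ length (wmul k f u) = length u.
Proof.
  revert k; induction u as [|x u IH]; intros k Hf HB; simpl.
  { split; [lra|auto]. }
  destruct (IH (S k)) as [h1 h2]; [ intros i hi; apply Hf; simpl; lia | exact HB | ].
  split; [|lia].
  rewrite nrm2_scal. assert (f k ^ 2 <= B) by (apply Hf; simpl; lia).
  pose proof (nrm2_nonneg H x). nra.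
Qed.

Lemma SS_numop (H : CHilbert) (u : DV H) N :
  (length u <= N)%nat ->
  SS H (numop u) <= (INR N + 1) ^ 2 * SS H u /\ (length (numop u) <= S N)%nat.
Proof.
  intros hl. unfold numop. destruct (SS_wmul H 0 INR ((INR N + 1)^2) u) as [h1 h2].
  - intros i hi. assert (INR i <= INR N) by (apply le_INR; lia).
    pose proof (pos_INR i). nra.
  - pose proof (pos_INR N). nra.
  - split; [auto | lia].
Qed.

Lemma sqS2 (i : nat) : sqrt (INR (S i)) ^ 2 = INR (S i).
Proof. cbn [pow]. rewrite Rmult_1_r. apply sqrt_sqrt. apply pos_INR. Qed.

Lemma SS_bdag (H : CHilbert) (u : DV H) N :
  (length u <= N)%nat ->
  SS H (bdag u) <= (INR N + 1) * SS H u /\ (length (bdag u) <= S N)%nat.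
Proof.
  intros hl. unfold bdag.
  destruct (SS_wmul H 0 (fun i => sqrt (INR (S i))) (INR N + 1) u) as [h1 h2].
  - intros i hi. rewrite sqS2. rewrite S_INR. assert (INR i <= INR N) by (apply le_INR; lia). lra.
  - pose proof (pos_INR N). lra.
  - rewrite SS_cons, nrm2_zero. cbn [length]. split; [lra | lia].
Qed.

Lemma SS_tl (H : CHilbert) (u : DV H) : SS H (tl u) <= SS H u.
Proof. destruct u; simpl. lra. pose proof (nrm2_nonneg H h). lra. Qed.

Lemma SS_bann (H : CHilbert) (u : DV H) N :
  (length u <= N)%nat ->
  SS H (bann u) <= (INR N + 1) * SS H u /\ (length (bann u) <= S N)%nat.
Proof.
  intros hl. unfold bann.
  assert (hl' : (length (tl u) <= N)%nat) by (destruct u; simpl in *; lia).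
  destruct (SS_wmul H 0 (fun i => sqrt (INR (S i))) (INR N + 1) (tl u)) as [h1 h2].
  - intros i hi. rewrite sqS2. rewrite S_INR. assert (INR i <= INR N) by (apply le_INR; lia). lra.
  - pose proof (pos_INR N). lra.
  - pose proof (SS_tl H u). pose proof (SS_nonneg H (tl u)). pose proof (pos_INR N).
    split; [nra | lia].
Qed.

Lemma SS_dsum_gen (H : CHilbert) (js : list nat) (f : nat -> DV H -> DV H) u B L :
  (forall j, In j js -> SS H (f j u) <= B /\ (length (f j u) <= L)%nat) -> 0 <= B ->
  SS H (fold_right (fun j acc => ladd (f j u) acc) nil js) <= 4 ^ length js * B /\
  (length (fold_right (fun j acc => ladd (f j u) acc) nil js) <= L)%nat.
Proof.
  intros Hf HB. induction js as [|j js IH]; simpl. split; [lra | lia].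
  destruct IH as [h1 h2]. { intros; apply Hf; simpl; auto. }
  destruct (Hf j (or_introl eq_refl)) as [h3 h4].
  split. 2: apply len_ladd; auto.
  eapply Rle_trans. apply SS_ladd.
  assert (1 <= 4 ^ length js) by (apply pow_R1_Rle; lra). nra.
Qed.

Lemma SS_dsum (H : CHilbert) n (f : nat -> DV H -> DV H) u B L :
  (forall j, (1 <= j <= n)%nat -> SS H (f j u) <= B /\ (length (f j u) <= L)%nat) -> 0 <= B ->
  SS H (dsum n f u) <= 4 ^ n * B /\ (length (dsum n f u) <= L)%nat.
Proof.
  intros Hf HB. unfold dsum.
  destruct (SS_dsum_gen H (seq 1 n) f u B L) as [h1 h2]; [|auto|rewrite length_seq in h1; auto]. intros j hj. apply in_seq in hj. apply Hf. lia.
Qed.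

Definition Good (H : CHilbert) (n : nat) (c : ACCoef H) (M : R) : Prop :=
  1 <= M /\ OB H M (E11 c) /\ OB H M (E10 c) /\ OB H M (E01 c) /\ OB H M (E00 c) /\
  OB H M (E11s c) /\ OB H M (E10s c) /\ OB H M (E01s c) /\ OB H M (E00s c) /\
  (forall i, (i <= n)%nat -> OB H M (Fc c i) /\ OB H M (Gc c i) /\ OB H M (Fcs c i) /\ OB H M (Gcs c i)) /\
  (forall i j, (i <= n)%nat -> (j <= n)%nat -> OB H M (Sc c i j) /\ OB H M (Scs c i j)).

Lemma fin_max (P : nat -> R -> Prop) :
  (forall i M M', M <= M' -> P i M -> P i M') -> (forall i, exists M, P i M) ->
  forall n, exists M, 1 <= M /\ forall i, (i <= n)%nat -> P i M.
Proof.
  intros Hm He n. induction n as [|n IH].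
  - destruct (He 0%nat) as [M HM]. exists (Rmax 1 M). split. apply Rmax_l.
    intros i hi. assert (i = 0%nat) by lia. subst. apply (Hm _ M). apply Rmax_r. auto.
  - destruct IH as [M1 [h1 h2]]. destruct (He (S n)) as [M2 HM2].
    exists (Rmax M1 M2). split. pose proof (Rmax_l M1 M2). lra.
    intros i hi. destruct (Nat.eq_dec i (S n)).
    + subst. apply (Hm _ M2). apply Rmax_r. auto.
    + apply (Hm _ M1). apply Rmax_l. apply h2. lia.
Qed.

Lemma OB4 (H : CHilbert) (B1 B2 B3 B4 : BOp H) :
  exists M, OB H M B1 /\ OB H M B2 /\ OB H M B3 /\ OB H M B4.
Proof.
  destruct (bop_OB H B1) as [M1 [p1 h1]]. destruct (bop_OB H B2) as [M2 [p2 h2]].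
  destruct (bop_OB H B3) as [M3 [p3 h3]]. destruct (bop_OB H B4) as [M4 [p4 h4]].
  exists (M1 + M2 + M3 + M4). repeat split; eapply OB_mono; eauto; lra.
Qed.

Lemma Good_exists (H : CHilbert) (n : nat) (c : ACCoef H) : exists M, Good H n c M.
Proof.
  destruct (OB4 H (E11 c) (E10 c) (E01 c) (E00 c)) as [Ma [a1 [a2 [a3 a4]]]].
  destruct (OB4 H (E11s c) (E10s c) (E01s c) (E00s c)) as [Mb [b1 [b2 [b3 b4]]]].
  destruct (fin_max (fun i M => OB H M (Fc c i) /\ OB H M (Gc c i) /\ OB H M (Fcs c i) /\ OB H M (Gcs c i)))
    with (n := n) as [Mc [pc hc]].
  { intros i M M' hm [x1 [x2 [x3 x4]]]. repeat split; eapply OB_mono; eauto. }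
  { intros i. apply OB4. }
  destruct (fin_max (fun i M => forall j, (j <= n)%nat -> OB H M (Sc c i j) /\ OB H M (Scs c i j)))
    with (n := n) as [Md [pd hd]].
  { intros i M M' hm hh j hj. destruct (hh j hj). split; eapply OB_mono; eauto. }
  { intros i. destruct (fin_max (fun j M => OB H M (Sc c i j) /\ OB H M (Scs c i j))) with (n := n)
      as [Me [pe he]].
    { intros j M M' hm [x1 x2]. split; eapply OB_mono; eauto. }
    { intros j. destruct (OB4 H (Sc c i j) (Scs c i j) (Sc c i j) (Sc c i j)) as [M [x1 [x2 _]]].
      exists M; auto. }
    exists Me. auto. }
  set (M := Rabs Ma + Rabs Mb + Mc + Md).
  pose proof (Rabs_pos Ma). pose proof (Rabs_pos Mb). pose proof (Rle_abs Ma). pose proof (Rle_abs Mb).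
  exists M. unfold Good.
  repeat split; try (eapply OB_mono; [|eassumption]; unfold M; lra); try (unfold M; lra).
  all: try (intros; eapply OB_mono; [|apply hc; assumption]; unfold M; lra).
  all: intros; eapply OB_mono; [|apply hd; assumption]; unfold M; lra.
Qed.

Lemma T_ge1 (N : nat) : 1 <= INR N + 1.
Proof. pose proof (pos_INR N). lra. Qed.

Lemma SS_LF (H : CHilbert) M (F G : H -> H) (op : DV H -> DV H) (u : DV H) N :
  1 <= M -> OB H M F -> OB H M G ->
  SS H (op u) <= (INR N + 1) * SS H u -> (length (op u) <= S N)%nat -> (length u <= N)%nat ->
  SS H (ladd (lmap F (op u)) (lmap G u)) <= 4 * M * (INR N + 1) * SS H u /\
  (length (ladd (lmap F (op u)) (lmap G u)) <= S N)%nat.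
Proof.
  intros hM hF hG h1 h2 hl.
  destruct (SS_lmap H M F (op u)) as [a1 a2]; auto; try lra.
  destruct (SS_lmap H M G u) as [b1 b2]; auto; try lra.
  split. 2: apply len_ladd; lia.
  eapply Rle_trans. apply SS_ladd.
  pose proof (T_ge1 N). pose proof (SS_nonneg H u). pose proof (SS_nonneg H (op u)).
  assert (M * SS H (op u) <= M * ((INR N + 1) * SS H u)) by (apply Rmult_le_compat_l; lra).
  assert (M * SS H u <= M * ((INR N + 1) * SS H u)) by (apply Rmult_le_compat_l; nra).
  nra.
Qed.

Lemma SS_Lop (H : CHilbert) n c M i (u : DV H) N :
  Good H n c M -> (i <= n)%nat -> (length u <= N)%nat ->
  SS H (Lop c i u) <= 4 * M * (INR N + 1) * SS H u /\ (length (Lop c i u) <= S N)%nat.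
Proof.
  intros hG hi hl. destruct hG as [hM [_ [_ [_ [_ [_ [_ [_ [_ [hc _]]]]]]]]]].
  destruct (hc i hi) as [x1 [x2 _]]. destruct (SS_bdag H u N hl).
  unfold Lop. apply SS_LF; auto.
Qed.

Lemma SS_Lsop (H : CHilbert) n c M i (u : DV H) N :
  Good H n c M -> (i <= n)%nat -> (length u <= N)%nat ->
  SS H (Lsop c i u) <= 4 * M * (INR N + 1) * SS H u /\ (length (Lsop c i u) <= S N)%nat.
Proof.
  intros hG hi hl. destruct hG as [hM [_ [_ [_ [_ [_ [_ [_ [_ [hc _]]]]]]]]]].
  destruct (hc i hi) as [_ [_ [x1 x2]]]. destruct (SS_bann H u N hl).
  unfold Lsop. apply SS_LF; auto.
Qed.



Lemma len_wmul (H : CHilbert) k f (u : DV H) : length (wmul k f u) = length u.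
Proof. revert k; induction u; intros; simpl; auto. Qed.

Lemma len_Lsop (H : CHilbert) c i (u : DV H) N :
  (length u <= N)%nat -> (length (Lsop c i u) <= N)%nat.
Proof.
  intros hl. unfold Lsop, bann, lmap.
  apply len_ladd; rewrite length_map; [rewrite len_wmul; destruct u; simpl in *|]; lia.
Qed.

Lemma SS_Nop (H : CHilbert) n c M i j (u : DV H) :
  Good H n c M -> (i <= n)%nat -> (j <= n)%nat ->
  SS H (Nop c i j u) <= M * SS H u /\ length (Nop c i j u) = length u /\
  SS H (Nsop c i j u) <= M * SS H u /\ length (Nsop c i j u) = length u.
Proof.
  intros hG hi hj. destruct hG as [hM [_ [_ [_ [_ [_ [_ [_ [_ [_ hd]]]]]]]]]].
  destruct (hd i j hi hj) as [x1 x2]. unfold Nop, Nsop.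
  destruct (SS_lmap H M (Sc c i j) u); auto; try lra.
  destruct (SS_lmap H M (Scs c i j) u); auto; try lra.
Qed.

Lemma SS_K4 (H : CHilbert) M (A B C D : H -> H) (u : DV H) N :
  1 <= M -> OB H M A -> OB H M B -> OB H M C -> OB H M D -> (length u <= N)%nat ->
  forall op1 op2,
  SS H (op1 u) <= (INR N + 1) * SS H u -> (length (op1 u) <= S N)%nat ->
  SS H (op2 u) <= (INR N + 1) * SS H u -> (length (op2 u) <= S N)%nat ->
  SS H (ladd (ladd (lmap A (numop u)) (lmap B (op1 u))) (ladd (lmap C (op2 u)) (lmap D u)))
   <= 16 * M * (INR N + 1) ^ 2 * SS H u /\
  (length (ladd (ladd (lmap A (numop u)) (lmap B (op1 u))) (ladd (lmap C (op2 u)) (lmap D u))) <= S N)%nat.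
Proof.
  intros hM hA hB hC hD hl op1 op2 o1 l1 o2 l2.
  destruct (SS_numop H u N hl) as [n1 n2].
  destruct (SS_lmap H M A (numop u)) as [a1 a2]; auto; try lra.
  destruct (SS_lmap H M B (op1 u)) as [b1 b2]; auto; try lra.
  destruct (SS_lmap H M C (op2 u)) as [c1 c2]; auto; try lra.
  destruct (SS_lmap H M D u) as [d1 d2]; auto; try lra.
  split. 2: repeat apply len_ladd; lia.
  pose proof (SS_ladd H (ladd (lmap A (numop u)) (lmap B (op1 u))) (ladd (lmap C (op2 u)) (lmap D u))).
  pose proof (SS_ladd H (lmap A (numop u)) (lmap B (op1 u))).
  pose proof (SS_ladd H (lmap C (op2 u)) (lmap D u)).
  pose proof (T_ge1 N). pose proof (SS_nonneg H u).
  set (T := INR N + 1) in *. set (s := SS H u) in *.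
  assert (M * SS H (numop u) <= M * (T^2 * s)) by (apply Rmult_le_compat_l; lra).
  assert (M * SS H (op1 u) <= M * (T * s)) by (apply Rmult_le_compat_l; lra).
  assert (M * SS H (op2 u) <= M * (T * s)) by (apply Rmult_le_compat_l; lra).
  assert (hT2 : T <= T^2) by (simpl; nra).
  assert (T * s <= T^2 * s) by (apply Rmult_le_compat_r; lra).
  assert (s <= T * s) by nra.
  assert (M * (T * s) <= M * (T^2 * s)) by (apply Rmult_le_compat_l; lra).
  assert (M * s <= M * (T^2 * s)) by (apply Rmult_le_compat_l; lra).
  lra.
Qed.

Definition Acst (n : nat) (M : R) : R := 4 ^ n * 16 * M * M.

Lemma Acst_ge (n : nat) M : 1 <= M -> 16 * M <= Acst n M /\ 4 * M * M * 4 ^ n <= Acst n M /\ 1 <= Acst n M.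
Proof.
  intros hM. unfold Acst. assert (1 <= 4 ^ n) by (apply pow_R1_Rle; lra).
  assert (1 <= M * M) by nra. assert (16 <= 4 ^ n * 16) by lra.
  repeat split; nra.
Qed.

Lemma SS_gen (H : CHilbert) n c M g (u : DV H) N :
  Good H n c M -> gen_ok n g -> (length u <= N)%nat ->
  SS H (gen_op n c g u) <= Acst n M * (INR N + 1) ^ (S (isK g)) * SS H u /\
  (length (gen_op n c g u) <= S N)%nat.
Proof.
  intros hG hg hl.
  pose proof hG as hG'. destruct hG' as [hM [e1 [e2 [e3 [e4 [f1 [f2 [f3 [f4 _]]]]]]]]].
  destruct (Acst_ge n M hM) as [A1 [A2 A3]].
  pose proof (T_ge1 N). pose proof (SS_nonneg H u).
  set (T := INR N + 1) in *. set (s := SS H u) in *.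
  assert (hTs : s <= T * s) by nra.
  assert (hT2 : T <= T ^ 2) by (simpl; nra).
  assert (0 <= 4 ^ n) by (apply pow_le; lra).
  destruct (SS_bdag H u N hl) as [bd1 bd2]. destruct (SS_bann H u N hl) as [bn1 bn2].
  destruct g; simpl in hg; cbn [isK gen_op].
  - destruct (SS_K4 H M _ _ _ _ u N hM e1 e2 e3 e4 hl (@bdag H) (@bann H)) as [k1 k2]; auto.
    split; [|exact k2]. change (INR N + 1) with T in k1; change (SS H u) with s in k1. unfold Kop, Ksop.
    assert (16 * M * T ^ 2 * s <= Acst n M * T ^ 2 * s).
    { apply Rmult_le_compat_r; auto. apply Rmult_le_compat_r; auto. apply pow_le; lra. }
    simpl (S 1). lra.
  - destruct (SS_K4 H M _ _ _ _ u N hM f1 f2 f3 f4 hl (@bann H) (@bdag H)) as [k1 k2]; auto.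
    split; [|exact k2]. change (INR N + 1) with T in k1; change (SS H u) with s in k1. unfold Kop, Ksop.
    assert (16 * M * T ^ 2 * s <= Acst n M * T ^ 2 * s).
    { apply Rmult_le_compat_r; auto. apply Rmult_le_compat_r; auto. apply pow_le; lra. }
    simpl (S 1). lra.
  - destruct (SS_Lop H n c M i u N hG ltac:(lia) hl) as [k1 k2]. split; auto.
    change (INR N + 1) with T in k1; change (SS H u) with s in k1. rewrite pow_1.
    assert (4 * M * T * s <= Acst n M * T * s).
    { apply Rmult_le_compat_r; auto. apply Rmult_le_compat_r; lra. } lra.
  - destruct (SS_Lsop H n c M i u N hG ltac:(lia) hl) as [k1 k2]. split; auto.
    change (INR N + 1) with T in k1; change (SS H u) with s in k1. rewrite pow_1.
    assert (4 * M * T * s <= Acst n M * T * s).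
    { apply Rmult_le_compat_r; auto. apply Rmult_le_compat_r; lra. } lra.
  - unfold Mop. destruct (SS_lopp H (dsum n (fun j v => Nop c i j (Lsop c j v)) u)) as [o1 o2].
    rewrite o1, o2. rewrite pow_1.
    destruct (SS_dsum H n (fun j v => Nop c i j (Lsop c j v)) u (M * (4 * M * T * s)) (S N))
      as [d1 d2]; [ | nra | ].
    + intros j hj. destruct (SS_Lsop H n c M j u N hG ltac:(lia) hl) as [k1 k2].
      destruct (SS_Nop H n c M i j (Lsop c j u) hG ltac:(lia) ltac:(lia)) as [m1 [m2 _]].
      split. change (INR N + 1) with T in k1; change (SS H u) with s in k1. eapply Rle_trans. apply m1. apply Rmult_le_compat_l; lra.
      lia.
    + split; auto. eapply Rle_trans. apply d1.
      assert (4 ^ n * (M * (4 * M * T * s)) = (4 * M * M * 4 ^ n) * (T * s)) by ring.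
      assert (0 <= T * s) by nra.
      assert ((4 * M * M * 4 ^ n) * (T * s) <= Acst n M * (T * s)) by (apply Rmult_le_compat_r; lra).
      lra.
  - unfold Msop. destruct (SS_lopp H (dsum n (fun j v => Lop c j (Nsop c i j v)) u)) as [o1 o2].
    rewrite o1, o2. rewrite pow_1.
    destruct (SS_dsum H n (fun j v => Lop c j (Nsop c i j v)) u (M * (4 * M * T * s)) (S N))
      as [d1 d2]; [ | nra | ].
    + intros j hj.
      destruct (SS_Nop H n c M i j u hG ltac:(lia) ltac:(lia)) as [_ [_ [m1 m2]]].
      destruct (SS_Lop H n c M j (Nsop c i j u) N hG ltac:(lia) ltac:(lia)) as [k1 k2].
      split; auto. change (INR N + 1) with T in k1, m1. eapply Rle_trans. apply k1.
      assert (4 * M * T * SS H (Nsop c i j u) <= 4 * M * T * (M * s)).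
      { apply Rmult_le_compat_l; auto. nra. }
      nra.
    + split; auto. eapply Rle_trans. apply d1.
      assert (4 ^ n * (M * (4 * M * T * s)) = (4 * M * M * 4 ^ n) * (T * s)) by ring.
      assert (0 <= T * s) by nra.
      assert ((4 * M * M * 4 ^ n) * (T * s) <= Acst n M * (T * s)) by (apply Rmult_le_compat_r; lra).
      lra.
  - destruct (SS_Nop H n c M i j u hG ltac:(lia) ltac:(lia)) as [m1 [m2 _]].
    split; [|lia]. rewrite pow_1. fold s in m1.
    assert (M * s <= Acst n M * (T * s)) by nra. lra.
  - destruct (SS_Nop H n c M i j u hG ltac:(lia) ltac:(lia)) as [_ [_ [m1 m2]]].
    split; [|lia]. rewrite pow_1. fold s in m1.
    assert (M * s <= Acst n M * (T * s)) by nra. lra.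
Qed.

Lemma iter_bound (H : CHilbert) n c M (u : DV H) (xs : list Gen) :
  Good H n c M -> Forall (gen_ok n) xs ->
  (length (apply_gens n c xs u) <= length u + length xs)%nat /\
  SS H (apply_gens n c xs u) <=
    Acst n M ^ length xs * INR (length u + length xs) ^ (length xs + countK xs) * SS H u.
Proof.
  intros hG hF. set (d := length u).
  induction xs as [|g xs IH]; simpl.
  - split. unfold d; lia. lra.
  - inversion hF; subst. destruct (IH H3) as [l1 s1].
    set (v := apply_gens n c xs u) in *. set (k := length xs) in *.
    destruct (SS_gen H n c M g v (d + k) hG H2 l1) as [g1 g2].
    change (fold_right (fun (g0 : Gen) (v0 : DV H) => gen_op n c g0 v0) u xs) with v.
    split. lia.
    assert (ET : INR (d + k) + 1 = INR (d + S k)) by (rewrite Nat.add_succ_r, S_INR; ring).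
    rewrite ET in g1.
    destruct (Acst_ge n M (proj1 hG)) as [_ [_ A3]].
    set (A := Acst n M) in *. set (T := INR (d + S k)) in *.
    set (D := INR (d + k)) in *.
    assert (hD : 0 <= D <= T) by (split; [apply pos_INR | unfold D, T; apply le_INR; lia]).
    assert (hDT : D ^ (k + countK xs) <= T ^ (k + countK xs)) by (apply pow_incr; lra).
    replace (k + (isK g + countK xs))%nat with (isK g + (k + countK xs))%nat by lia.
    rewrite pow_add.
    pose proof (SS_nonneg H u). pose proof (SS_nonneg H v).
    assert (0 <= A ^ k) by (apply pow_le; lra).
    assert (0 <= T ^ S (isK g)) by (apply pow_le; lra).
    assert (0 <= D ^ (k + countK xs)) by (apply pow_le; lra).
    eapply Rle_trans. apply g1.
    assert (h7 : A * T ^ S (isK g) * SS H v <= A * T ^ S (isK g) * (A ^ k * D ^ (k + countK xs) * SS H u)).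
    { apply Rmult_le_compat_l. apply Rmult_le_pos; lra. exact s1. }
    eapply Rle_trans. apply h7.
    assert (A ^ k * D ^ (k + countK xs) * SS H u <= A ^ k * T ^ (k + countK xs) * SS H u).
    { apply Rmult_le_compat_r; auto. apply Rmult_le_compat_l; auto. }
    assert (0 <= A * T ^ S (isK g)) by (apply Rmult_le_pos; lra).
    apply Rle_trans with (A * T ^ S (isK g) * (A ^ k * T ^ (k + countK xs) * SS H u)).
    apply Rmult_le_compat_l; auto. right; simpl; ring.
Qed.

Lemma pow_le_fact_exp (x : R) (j : nat) : 0 <= x -> x ^ j <= INR (fact j) * exp x.
Proof.
  intros hx.
  assert (hpos : forall k, 0 <= / INR (fact k) * x ^ k).
  { intros k. apply Rmult_le_pos. left; apply Rinv_0_lt_compat, INR_fact_lt_0. apply pow_le; auto. }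
  assert (hg : Un_growing (E1 x)).
  { intros m. unfold E1. cbn [sum_f_R0]. specialize (hpos (S m)). lra. }
  pose proof (growing_ineq _ _ hg (E1_cvg x) j) as h.
  assert (ht : / INR (fact j) * x ^ j <= E1 x j).
  { unfold E1. destruct j. cbn [sum_f_R0]. lra. cbn [sum_f_R0].
    pose proof (cond_pos_sum (fun k => / INR (fact k) * x ^ k) j hpos). lra. }
  pose proof (INR_fact_lt_0 j).
  assert (x ^ j = INR (fact j) * (/ INR (fact j) * x ^ j)) by (field; lra).
  rewrite H0. apply Rmult_le_compat_l; lra.
Qed.

Lemma exp_INR (l : nat) : exp (INR l) = exp 1 ^ l.
Proof.
  induction l. simpl. apply exp_0.
  rewrite S_INR, exp_plus, IHl. simpl. ring.
Qed.

Lemma sqrt_pow_ (x : R) (l : nat) : 0 <= x -> sqrt (x ^ l) = sqrt x ^ l.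
Proof.
  intros hx. induction l. simpl. apply sqrt_1.
  simpl. rewrite sqrt_mult_alt by auto. rewrite IHl. auto.
Qed.

Lemma isum_scal (f : nat -> R) l k : infinite_sum f l -> infinite_sum (fun n => f n * k) (l * k).
Proof.
  intros hf. pose proof (CV_mult (fun N => sum_f_R0 f N) (fun _ => k) l k hf) as h.
  assert (hk : Un_cv (fun _ : nat => k) k).
  { intros e he. exists 0%nat. intros. unfold Rdist. rewrite Rminus_diag, Rabs_R0. lra. }
  specialize (h hk). intros e he. destruct (h e he) as [N hN]. exists N. intros m hm.
  rewrite <- scal_sum. rewrite Rmult_comm. apply hN. auto.
Qed.

Lemma isum_ext (f g : nat -> R) l : (forall n, f n = g n) -> infinite_sum f l -> infinite_sum g l.
Proof.
  intros he hf e hep. destruct (hf e hep) as [N hN]. exists N. intros m hm.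
  rewrite <- (sum_eq f g m). apply hN; auto. intros; auto.
Qed.

Theorem mainTheorem6 (H : CHilbert) (n : nat) (c : ACCoef H)
  (Hadj : ac_adjoint n c) (HHP : ac_HP n c) :
  exists eps : R, 0 < eps /\
    forall u : DV H, exists cc : nat -> R,
      (forall l, 0 <= cc l) /\
      (exists s, infinite_sum (fun l => cc (S l) * eps ^ (S l)) s) /\
      (forall xs : list Gen, (1 <= length xs)%nat -> Forall (gen_ok n) xs ->
         lnorm (apply_gens n c xs u)
           <= cc (length xs) * sqrt (INR (fact (length xs + countK xs)))).
Proof.
  destruct (Good_exists H n c) as [M hG].
  destruct (Acst_ge n M (proj1 hG)) as [_ [_ A3]].
  set (A := Acst n M) in *.
  pose proof (exp_pos 1) as he1.
  assert (hAe : 0 < A * exp 1) by (apply Rmult_lt_0_compat; lra).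
  set (q := sqrt (A * exp 1)).
  assert (hq : 0 < q) by (apply sqrt_lt_R0; auto).
  exists (/ (2 * q)). split. apply Rinv_0_lt_compat; lra.
  intros u. set (d := length u).
  pose proof (SS_nonneg H u) as hs.
  pose proof (exp_pos (INR d)) as hed.
  set (K := sqrt (SS H u * exp (INR d))).
  assert (hK : 0 <= K) by apply sqrt_pos.
  exists (fun l => K * q ^ l). split; [|split].
  - intros l. apply Rmult_le_pos; auto. apply pow_le; lra.
  - exists (/ (1 - / 2) * (K * / 2)).
    apply isum_ext with (f := fun l => 1 * (/ 2) ^ l * (K * / 2)).
    + intros l. cbv beta. rewrite (Rmult_assoc K), <- Rpow_mult_distr.
      replace (q * / (2 * q)) with (/ 2) by (field; lra). simpl. ring.
    + apply isum_scal. apply GP_infinite. rewrite Rabs_right; lra.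
  - intros xs hl hF. destruct (iter_bound H n c M u xs hG hF) as [_ hS].
    fold d in hS. fold A in hS.
    set (l := length xs) in *. set (j := (l + countK xs)%nat) in *.
    rewrite lnorm_SS.
    assert (hf : 0 <= INR (fact j)) by apply pos_INR.
    assert (E : K * q ^ l * sqrt (INR (fact j)) =
                sqrt (SS H u * exp (INR d) * (A * exp 1) ^ l * INR (fact j))).
    { unfold K, q. rewrite <- sqrt_pow_ by lra.
      rewrite <- !sqrt_mult_alt. reflexivity.
      apply Rmult_le_pos. apply Rmult_le_pos; lra. apply pow_le; lra.
      apply Rmult_le_pos; lra. }
    rewrite E. apply sqrt_le_1_alt.
    eapply Rle_trans. apply hS.
    pose proof (pow_le_fact_exp (INR (d + l)) j (pos_INR _)) as hx.
    rewrite plus_INR, exp_plus, (exp_INR l) in hx.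
    assert (0 <= A ^ l) by (apply pow_le; lra).
    apply Rle_trans with (A ^ l * (INR (fact j) * (exp (INR d) * exp 1 ^ l)) * SS H u).
    + apply Rmult_le_compat_r; auto. apply Rmult_le_compat_l; auto. rewrite plus_INR; exact hx.
    + rewrite Rpow_mult_distr. right; ring.
Qed.
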